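(* Let $q\in\mathbb{C}^\times$ with $q^2\ne\pm1$, $n\ge2$, $\mathbf{Q}\in\mathbb{C}^{n-1}$. Then the algebra $U_q(\mathfrak{sl}_n^{\langle\mathbf{Q}\rangle}[x])$ is generated by the elements $X^{\pm}_{i,0}$, $J_{i,1}$, $K_i^{\pm}$ for $i\in\{1,\dots,n-1\}$.
   Context: Let $I=\{1,\dots,n-1\}$, $(a_{ij})$ the Cartan matrix of type $A_{n-1}$, $[k]=(q^k-q^{-k})/(q-q^{-1})$, $[x,y]=xy-yx$. For $\mathbf{Q}=(Q_1,\dots,Q_{n-1})$, $U_q(\mathfrak{sl}_n^{\langle\mathbf{Q}\rangle}[x])$ is the $\mathbb{C}$-algebra with generators $X^{\pm}_{i,t},J_{i,t},K_i^{\pm}$ ($i\in I,t\ge0$) and relations: all $K_i^+$, $J_{j,t}$ pairwise commute; $K_i^+K_i^-=1=K_i^-K_i^+$; $(K_i^-)^2=1-(q-q^{-1})J_{i,0}$; $X^{\pm}_{i,t+1}X^{\pm}_{j,s}-q^{\pm a_{ij}}X^{\pm}_{j,s}X^{\pm}_{i,t+1}=q^{\pm a_{ij}}X^{\pm}_{i,t}X^{\pm}_{j,s+1}-X^{\pm}_{j,s+1}X^{\pm}_{i,t}$; $K_i^+X^{\pm}_{j,t}K_i^-=q^{\pm a_{ij}}X^{\pm}_{j,t}$; $q^{\pm a_{ij}}J_{i,0}X^{\pm}_{j,t}-q^{\mp a_{ij}}X^{\pm}_{j,t}J_{i,0}=[\pm a_{ij}]X^{\pm}_{j,t}$; $[J_{i,s+1},X^{\pm}_{j,t}]=q^{\pm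 a_{ij}}J_{i,s}X^{\pm}_{j,t+1}-q^{\mp a_{ij}}X^{\pm}_{j,t+1}J_{i,s}$; $[X^+_{i,t},X^-_{j,s}]=\delta_{ij}K_i^+(J_{i,s+t}-Q_iJ_{i,s+t+1})$; $[X^\pm_{i,t},X^\pm_{j,s}]=0$ if $j\ne i,i\pm1$; $X^{\pm}_{i\pm1,u}(X^{\pm}_{i,s}X^{\pm}_{i,t}+X^{\pm}_{i,t}X^{\pm}_{i,s})+(X^{\pm}_{i,s}X^{\pm}_{i,t}+X^{\pm}_{i,t}X^{\pm}_{i,s})X^{\pm}_{i\pm1,u}=(q+q^{-1})(X^{\pm}_{i,s}X^{\pm}_{i\pm1,u}X^{\pm}_{i,t}+X^{\pm}_{i,t}X^{\pm}_{i\pm1,u}X^{\pm}_{i,s})$. *)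

(* Defs.v *)
From HB Require Import structures.
From mathcomp Require Import all_boot all_order all_algebra.
From mathcomp Require Import complex Rstruct.
Set Implicit Arguments. Unset Strict Implicit. Unset Printing Implicit Defensive.
Import Order.TTheory GRing.Theory Num.Theory.
Local Open Scope ring_scope.

Definition C : numClosedFieldType := (Rdefinitions.R)[i].

(* Cartan matrix of type A_m (here m = n-1), indices 0..m-1 stand for 1..n-1. *)
Definition cartanA {m : nat} (i j : 'I_m) : int :=
  if i == j then (2%:Z)%R
  else if (i.+1 == j :> nat) || (j.+1 == i :> nat) then (- 1%:Z)%R else 0%R.

Definition adjacent {m : nat} (i j : 'I_m) : bool :=
  (i.+1 == j :> nat) || (j.+1 == i :> nat).

Definition sgnb (e : bool) : int := if e then 1%R else (- 1)%R.

Definition qint (q : C) (k : int) : C := (q ^ k - q ^ (- k)) / (q - q^-1).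

(* The defining relations of U_q(sl_n^<Q>[x]), stated for a family of
   elements X^{e}_{i,t} (X e i t, e = true for +), J_{i,t}, K_i^+, K_i^- of
   a C-algebra A.  Here m = n - 1. *)
Definition sl_Q_relations {m : nat} (q : C) (Q : 'I_m -> C) (A : algType C)
    (X : bool -> 'I_m -> nat -> A) (J : 'I_m -> nat -> A)
    (Kp Km : 'I_m -> A) : Prop :=
  (forall i j : 'I_m, Kp i * Kp j = Kp j * Kp i) /\
  (forall (i j : 'I_m) (t : nat), Kp i * J j t = J j t * Kp i) /\
  (forall (i j : 'I_m) (s t : nat), J i s * J j t = J j t * J i s) /\
  (forall i : 'I_m, Kp i * Km i = 1 /\ Km i * Kp i = 1) /\
  (forall i : 'I_m, Km i ^+ 2 = 1 - (q - q^-1) *: J i 0%N) /\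
  (forall (e : bool) (i j : 'I_m) (t s : nat),
      X e i t.+1 * X e j s - q ^ (sgnb e * cartanA i j) *: (X e j s * X e i t.+1)
      = q ^ (sgnb e * cartanA i j) *: (X e i t * X e j s.+1)
        - X e j s.+1 * X e i t) /\
  (forall (e : bool) (i j : 'I_m) (t : nat),
      Kp i * X e j t * Km i = q ^ (sgnb e * cartanA i j) *: X e j t) /\
  (forall (e : bool) (i j : 'I_m) (t : nat),
      q ^ (sgnb e * cartanA i j) *: (J i 0%N * X e j t)
      - q ^ (- (sgnb e * cartanA i j)) *: (X e j t * J i 0%N)
      = qint q (sgnb e * cartanA i j) *: X e j t) /\
  (forall (e : bool) (i j : 'I_m) (s t : nat),
      J i s.+1 * X e j t - X e j t * J i s.+1
      = q ^ (sgnb e * cartanA i j) *: (J i s * X e j t.+1)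
        - q ^ (- (sgnb e * cartanA i j)) *: (X e j t.+1 * J i s)) /\
  (forall (i j : 'I_m) (t s : nat),
      X true i t * X false j s - X false j s * X true i t
      = if i == j then Kp i * (J i (s + t)%N - Q i *: J i (s + t).+1) else 0) /\
  (forall (e : bool) (i j : 'I_m) (t s : nat),
      i != j -> ~~ adjacent i j ->
      X e i t * X e j s - X e j s * X e i t = 0) /\
  (forall (e : bool) (i j : 'I_m) (s t u : nat), adjacent i j ->
      X e j u * (X e i s * X e i t + X e i t * X e i s)
      + (X e i s * X e i t + X e i t * X e i s) * X e j u
      = (q + q^-1) *: (X e i s * X e j u * X e i t + X e i t * X e j u * X e i s)).

Inductive subalg_gen (A : algType C) (S : A -> Prop) : A -> Prop :=
  | sg_base a : S a -> subalg_gen S a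
  | sg_scal (c : C) : subalg_gen S (c%:A)
  | sg_add a b : subalg_gen S a -> subalg_gen S b -> subalg_gen S (a + b)
  | sg_mul a b : subalg_gen S a -> subalg_gen S b -> subalg_gen S (a * b).

(* Main.v *)
Require Import Defs.
From HB Require Import structures.
From mathcomp Require Import all_boot all_order all_algebra.
From mathcomp Require Import complex Rstruct.
Import Order.TTheory GRing.Theory Num.Theory.
Local Open Scope ring_scope.

Lemma sg_scale (A : algType C) (S : A -> Prop) (c : C) a :
  subalg_gen S a -> subalg_gen S (c *: a).
Proof. move=> h; rewrite -mulr_algl; apply: sg_mul => //; apply: sg_scal. Qed.

Lemma sg_sub (A : algType C) (S : A -> Prop) a b :
  subalg_gen S a -> subalg_gen S b -> subalg_gen S (a - b).
Proof. move=> ha hb; rewrite -scaleN1r; apply: sg_add => //; exact: sg_scale. Qed.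

Lemma sg_one (A : algType C) (S : A -> Prop) : subalg_gen S 1.
Proof. rewrite -(scale1r (1 : A)); exact: (sg_scal S 1). Qed.

Theorem mainTheorem5 (n : nat) (q : C) (Q : 'I_(n.-1) -> C) :
  q != 0 -> q ^+ 2 != 1 -> q ^+ 2 != -1 -> (2 <= n)%N ->
  forall (A : algType C) (X : bool -> 'I_(n.-1) -> nat -> A)
         (J : 'I_(n.-1) -> nat -> A) (Kp Km : 'I_(n.-1) -> A),
  sl_Q_relations q Q X J Kp Km ->
  let S : A -> Prop := fun a =>
    exists i : 'I_(n.-1),
      (exists e : bool, a = X e i 0%N) \/ a = J i 1%N \/ a = Kp i \/ a = Km i in
  forall (i : 'I_(n.-1)) (t : nat),
    (forall e : bool, subalg_gen S (X e i t)) /\ subalg_gen S (J i t) /\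
    subalg_gen S (Kp i) /\ subalg_gen S (Km i).
Proof.
move=> q0 q21 q2m1 n2 A X J Kp Km R S i t.
destruct R as [_ [_ [_ [HK [HKm [_ [_ [HJ0 [HJX [HXX _]]]]]]]]]].
have sK : subalg_gen S (Kp i) by apply: sg_base; exists i; right; right; left.
have sKm : subalg_gen S (Km i) by apply: sg_base; exists i; right; right; right.
have sJ1 : subalg_gen S (J i 1%N) by apply: sg_base; exists i; right; left.
have qq : q - q^-1 != 0.
  apply/eqP => h; move/eqP: q21; apply.
  have : q * (q - q^-1) = 0 by rewrite h mulr0.
  by rewrite mulrBr mulfV // -expr2 => /eqP; rewrite subr_eq0 => /eqP.
have sJ0 : subalg_gen S (J i 0%N).
  have -> : J i 0%N = (q - q^-1)^-1 *: (1 - Km i ^+ 2).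
    by rewrite HKm opprB addrCA subrr addr0 scalerA mulVf // scale1r.
  apply: sg_scale; apply: sg_sub; first exact: sg_one.
  by rewrite expr2; apply: sg_mul.
have hq : forall e, qint q (sgnb e * cartanA i i) != 0.
    move=> e; rewrite /qint /cartanA eqxx mulf_neq0 ?invr_eq0 //.
    have h2 : q ^+ 2 - (q ^+ 2)^-1 != 0.
      apply/eqP => h.
      have : q ^+ 2 * (q ^+ 2 - (q ^+ 2)^-1) = 0 by rewrite h mulr0.
      rewrite mulrBr mulfV ?expf_neq0 // => /eqP.
      have -> : q ^+ 2 * q ^+ 2 - 1 = (q ^+ 2 - 1) * (q ^+ 2 + 1).
        by rewrite mulrDr mulr1 mulrBl mul1r addrA subrK.
      by rewrite mulf_eq0 subr_eq0 addr_eq0 (negbTE q21) (negbTE q2m1).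
    case: e => /=; rewrite ?mul1r ?mulN1r ?opprK -exprnN //.
    by rewrite -opprB oppr_eq0.
have sX : forall e t, subalg_gen S (X e i t).
  move=> e; elim=> [|k IH]; first by apply: sg_base; exists i; left; exists e.
  have H := HJX e i i 0%N k; rewrite (HJ0 e i i k.+1) in H.
  set c := qint q _ in H.
  have c0 : c != 0 by apply: hq.
  have -> : X e i k.+1 = c^-1 *: (J i 1%N * X e i k - X e i k * J i 1%N).
    by rewrite H scalerA mulVf // scale1r.
  by apply: sg_scale; apply: sg_sub; apply: sg_mul.
split; first by move=> e; apply: sX.
split; last by split.
have HX t' : X true i t' * X false i 0%N - X false i 0%N * X true i t' =
   Kp i * (J i t' - Q i *: J i t'.+1) by rewrite HXX eqxx add0n.
have sC t' : subalg_gen S (Km i * (X true i t' * X false i 0%N - X false i 0%N * X true i t')).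
  by apply: sg_mul => //; apply: sg_sub; apply: sg_mul.
have HC t' : Km i * (X true i t' * X false i 0%N - X false i 0%N * X true i t') =
   J i t' - Q i *: J i t'.+1.
  by rewrite HX mulrA (proj2 (HK i)) mul1r.
have [Q0|Q0] := eqVneq (Q i) 0.
  by move: (sC t); rewrite HC Q0 scale0r subr0.
elim: t => [|k IH] //.
have -> : J i k.+1 = (Q i)^-1 *: (J i k - (J i k - Q i *: J i k.+1)).
  by rewrite opprB addrC subrK scalerA mulVf // scale1r.
by apply: sg_scale; apply: sg_sub => //; rewrite -HC.
Qed.
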